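(* Let $\mathbf{y}$ be observed data with summary statistic vector $s(\mathbf{y})\in\mathbb{R}^\kappa$, and let $(\theta^i,\mathbf{x}^{i*})$, $i=1,\dots,N$, be parameter samples paired with simulated pseudo-data having summary statistics $s(\mathbf{x}^{i*})\in\mathbb{R}^\kappa$. For a weight vector $\mathbf{w}\in E\subset\mathbb{R}^\kappa$, define the weighted distance $d_{\mathbf{w}}(s(\mathbf{x}),s(\mathbf{y}))=\sum_{i=1}^\kappa w_i^2(s_i(\mathbf{x})-s_i(\mathbf{y}))^2$, and let $Y^{(\mathbf{w})}_{1:n}$ be the parameter samples $\theta^i$ corresponding to the $n=M=\lfloor\alpha N\rfloor$ pseudo-data sets closest to $\mathbf{y}$ under $d_{\mathbf{w}}$. Let $X_{1:n}$ be a fixed sample (from the prior). Then $L(\mathbf{w})=\hat{D}_h(X_{1:n}\|Y^{(\mathbf{w})}_{1:n})$ is piecewise constant with respect to $\mathbf{w}\in E$, with finitely many discontinuities.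
   Context: For samples $X_{1:n},Y_{1:n}$ in $\mathbb{R}^d$ and an integer $k\ge 2$, let $\rho_k(i)$ be the Euclidean distance from $X_i$ to its $k$th nearest neighbour in $X_{1:n}$ (excluding itself) and $\nu_k(i)$ the distance from $X_i$ to its $k$th nearest neighbour in $Y_{1:n}$. The estimator is $\hat D_{\alpha'}(X_{1:n}\|Y_{1:n})=\frac1n\sum_{i=1}^n\left(\frac{(n-1)\rho_k(i)}{n\nu_k(i)}\right)^{1-\alpha'}B_{k,\alpha'}$ with $B_{k,\alpha'}=\frac{\Gamma(k)^2}{\Gamma(k-\alpha'+1)\Gamma(k+\alpha'-1)}$, and $\hat D_h=1-\hat D_{1/2}$. Here $\alpha\in(0,1)$ is the ABC acceptance proportion. *)

(* Defs.v *)
From HB Require Import structures.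
From mathcomp Require Import all_boot all_order all_algebra.
From mathcomp Require Import all_classical all_reals all_analysis.
Set Implicit Arguments. Unset Strict Implicit. Unset Printing Implicit Defensive.
Import Order.TTheory GRing.Theory Num.Theory.
Import numFieldNormedType.Exports.
Local Open Scope classical_set_scope.
Local Open Scope ring_scope.

Section Defs.
Variable R : realType.

Definition Gamma (x : R) : R :=
  Rintegral (@lebesgue_measure R) `]0, +oo[%classic
    (fun t => t `^ (x - 1) * expR (- t)).

Definition eucl_dist (d : nat) (u v : 'rV[R]_d) : R :=
  Num.sqrt (\sum_(l < d) (u ord0 l - v ord0 l) ^+ 2).

(* k-th smallest element (k >= 1) of a finite sequence of reals
   (0 if the sequence has fewer than k elements). *)
Definition kth_smallest (k : nat) (s : seq R) : R :=
  nth 0 (sort <=%R s) k.-1.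

Definition rho_k (d n k : nat) (X : 'I_n -> 'rV[R]_d) (i : 'I_n) : R :=
  kth_smallest k [seq eucl_dist (X i) (X j) | j <- enum 'I_n & j != i].

Definition nu_k (d n k : nat) (X Y : 'I_n -> 'rV[R]_d) (i : 'I_n) : R :=
  kth_smallest k [seq eucl_dist (X i) (Y j) | j <- enum 'I_n].

Definition B_const (k : nat) (a : R) : R :=
  Gamma k%:R ^+ 2 / (Gamma (k%:R - a + 1) * Gamma (k%:R + a - 1)).

Definition D_alpha_hat (d n k : nat) (a : R) (X Y : 'I_n -> 'rV[R]_d) : R :=
  n%:R^-1 * \sum_(i < n)
     ((((n%:R - 1) * rho_k k X i) / (n%:R * nu_k k X Y i)) `^ (1 - a)
        * B_const k a).

Definition D_h_hat (d n k : nat) (X Y : 'I_n -> 'rV[R]_d) : R :=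
  1 - D_alpha_hat k (2^-1) X Y.

Definition d_w (kappa : nat) (w sx sy : 'rV[R]_kappa) : R :=
  \sum_(l < kappa) w ord0 l ^+ 2 * (sx ord0 l - sy ord0 l) ^+ 2.

Definition abc_before (kappa N : nat) (w : 'rV[R]_kappa)
    (S : 'I_N -> 'rV[R]_kappa) (sy : 'rV[R]_kappa) (j i : 'I_N) : bool :=
  (d_w w (S j) sy < d_w w (S i) sy) ||
  ((d_w w (S j) sy == d_w w (S i) sy) && (j < i)%N).

(* indices of the M closest pseudo-data sets (in increasing index order) *)
Definition abc_selected (kappa N M : nat) (w : 'rV[R]_kappa)
    (S : 'I_N -> 'rV[R]_kappa) (sy : 'rV[R]_kappa) : seq 'I_N :=
  [seq i <- enum 'I_N | (#|[pred j | abc_before w S sy j i]| < M)%N].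

(* Y^{(w)}_{1:M}: the accepted parameter samples, as an M-indexed family
   (default th0 is never used since exactly M indices are selected). *)
Definition Y_w (d kappa N M : nat) (w : 'rV[R]_kappa)
    (S : 'I_N -> 'rV[R]_kappa) (sy : 'rV[R]_kappa)
    (theta : 'I_N -> 'rV[R]_d) : 'I_M -> 'rV[R]_d :=
  fun m => nth 0 [seq theta i | i <- @abc_selected kappa N M w S sy] m.

Definition L_w (d kappa N M k : nat) (X : 'I_M -> 'rV[R]_d)
    (S : 'I_N -> 'rV[R]_kappa) (sy : 'rV[R]_kappa)
    (theta : 'I_N -> 'rV[R]_d) (w : 'rV[R]_kappa) : R :=
  D_h_hat k X (@Y_w d kappa N M w S sy theta).

End Defs.

(* Main.v *)
Require Import Defs.
From HB Require Import structures.
From mathcomp Require Import all_boot all_order all_algebra.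
From mathcomp Require Import all_classical all_reals all_analysis.
From mathcomp Require Import ring lra.
Import Order.TTheory GRing.Theory Num.Theory.
Import numFieldNormedType.Exports.
Local Open Scope classical_set_scope.
Local Open Scope ring_scope.

Definition qf {R : realType} {kappa} (c w : 'rV[R]_kappa) : R :=
  \sum_(l < kappa) c ord0 l * w ord0 l ^+ 2.

Lemma qf_cvg {R : realType} {kappa} (c w0 : 'rV[R]_kappa) :
  qf c w @[w --> w0] --> qf c w0.
Proof.
rewrite /qf; apply: (@cvg_big _ _ +%R 0 xpredT); first exact: add_continuous.
  exact: nbhs_filter.
move=> l _; apply: cvgMl_tmp; first exact: nbhs_filter.
exact: (cvgM (@coord_continuous R 1 kappa ord0 l w0) (@coord_continuous R 1 kappa ord0 l w0)).
Qed.

Definition cij {R : realType} {kappa N} (S : 'I_N -> 'rV[R]_kappa) (sy : 'rV[R]_kappa) (i j : 'I_N)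
  : 'rV[R]_kappa :=
  \row_l ((S j ord0 l - sy ord0 l) ^+ 2 - (S i ord0 l - sy ord0 l) ^+ 2).

Lemma dw_diff (R : realType) kappa N (S : 'I_N -> 'rV[R]_kappa) sy w i j :
  d_w w (S j) sy - d_w w (S i) sy = qf (cij S sy i j) w.
Proof.
rewrite /d_w /qf -sumrB; apply: eq_bigr => l _; by rewrite mxE [RHS]mulrC mulrBr.
Qed.

Lemma abc_beforeE (R : realType) kappa N (S : 'I_N -> 'rV[R]_kappa) sy w i j :
  abc_before w S sy j i =
  (qf (cij S sy i j) w < 0) || ((qf (cij S sy i j) w == 0) && (j < i)%N).
Proof. by rewrite /abc_before -dw_diff subr_lt0 subr_eq0. Qed.

Theorem lemma4 (R : realType) (d kappa N k : nat) (alpha : R)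
    (E : set 'rV[R]_kappa)
    (sy : 'rV[R]_kappa) (S : 'I_N -> 'rV[R]_kappa)
    (theta : 'I_N -> 'rV[R]_d)
    (M : nat) (X : 'I_M -> 'rV[R]_d) :
  0 < alpha < 1 -> (2 <= k)%N -> (M%:Z = Num.floor (alpha * N%:R))%R ->
  let L := L_w k X S sy theta in
  finite_set (L @` E) /\
  exists cs : seq 'rV[R]_kappa,
    all (fun c => c != 0) cs /\
    forall w0, E w0 ->
      (forall c, c \in cs -> \sum_(l < kappa) c ord0 l * w0 ord0 l ^+ 2 != 0) ->
      \forall w \near w0, E w -> L w = L w0.
Proof.
move=> _ _ _ L; split.
  pose Hf (p : {ffun 'I_N -> bool}) := D_h_hat k X
    (fun m : 'I_M => nth 0 [seq theta i | i <- [seq i <- enum 'I_N | p i]] m).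
  apply: (@sub_finite_set _ _ (Hf @` setT)); last exact/finite_image/finite_finset.
  move=> _ [w _ <-]; exists [ffun i => (#|[pred j | abc_before w S sy j i]| < M)%N]; first by [].
  rewrite /L /L_w /Y_w /abc_selected; congr D_h_hat.
  by under eq_filter do rewrite ffunE.
exists [seq cij S sy p.1 p.2 | p <- enum {: 'I_N * 'I_N} & cij S sy p.1 p.2 != 0].
split.
  by apply/allP => c /mapP [p]; rewrite mem_filter => /andP [h _] ->.
move=> w0 _ Hw0.
have key : \forall w \near w0, forall p : ('I_N * 'I_N)%type,
    abc_before w S sy p.1 p.2 = abc_before w0 S sy p.1 p.2.
  have := @filter_forall _ _ (fun (p : ('I_N * 'I_N)%type) w =>
    abc_before w S sy p.1 p.2 = abc_before w0 S sy p.1 p.2) (nbhs w0).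
  move=> h; apply: h => -[j i] /=.
  have [c0|cn0] := eqVneq (cij S sy i j) 0.
    near=> w; rewrite !abc_beforeE c0 /qf.
    by rewrite !big1 // => l _; rewrite mxE mul0r.
  have hq : qf (cij S sy i j) w0 != 0.
    apply: Hw0; apply/mapP; exists (i, j) => //.
    by rewrite mem_filter cn0 mem_enum.
  have [lt0|gt0|eq0] := ltgtP (qf (cij S sy i j) w0) 0.
  - near=> w; rewrite !abc_beforeE lt0.
    suff -> : qf (cij S sy i j) w < 0 by [].
    near: w; exact: (cvgr_lt _ (qf_cvg _ w0) 0 lt0).
  - near=> w; rewrite !abc_beforeE (lt_gtF gt0) (gt_eqF gt0).
    suff h : 0 < qf (cij S sy i j) w by rewrite (lt_gtF h) (gt_eqF h).
    near: w; exact: (cvgr_gt _ (qf_cvg _ w0) 0 gt0).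
  - by rewrite eq0 eqxx in hq.
near=> w => _.
have Hk : forall p : ('I_N * 'I_N)%type, abc_before w S sy p.1 p.2 = abc_before w0 S sy p.1 p.2.
  by near: w.
rewrite /L /L_w /Y_w.
have -> : abc_selected M w S sy = abc_selected M w0 S sy.
  apply: eq_filter => i; congr (_ < M)%N; apply: eq_card => j.
  by rewrite !inE (Hk (j, i)).
by [].
Unshelve. all: by end_near. Qed.
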